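(* Let $0<r<1$. In the RRH with redirection parameter $r$, for every $N\ge 1$, $$\mathbb{E}[\mathcal{R}_2(N)]=\frac{1}{r}\left[\frac{\Gamma(N+r)}{\Gamma(1+r)\,\Gamma(N)}-1\right],$$ and consequently $\mathbb{E}[\mathcal{R}_2(N)]\sim \dfrac{N^r}{r\,\Gamma(1+r)}$ as $N\to\infty$.
   Context: The RRH with redirection parameter $r\in[0,1)$ is the following random hypergraph process. At size $N=1$ it has vertex set $\{v_1\}$ and edge set $\{\{v_1\}\}$. Given the hypergraph of size $N$ (vertices $v_1,\dots,v_N$, $N$ edges), choose an existing edge $e$ uniformly at random and add a new vertex $v_{N+1}$ and one new edge, as follows. If $e=\{v_1\}$, the new edge is $\{v_1,v_{N+1}\}$. Otherwise write $e=\{v_{i_1},\dots,v_{i_n}\}$ with $1=i_1<\dots<i_n$, $n\ge2$; independently, with probability $1-r$ the new edge is $e\cup\{v_{N+1}\}$ and with probability $r$ it is $\{v_{i_1},\dots,v_{i_{n-1}},v_{N+1}\}$. $\mathcal{R}_k(N)$ denotes the number of edges of size $k$ at size $N$. *)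

(* Defs.v *)
From Stdlib Require Import Reals Lra List.
From Coquelicot Require Import Coquelicot.
Import ListNotations.
Open Scope R_scope.

Definition Gamma (x : R) : R :=
  RInt_gen (fun t => Rpower t (x - 1) * exp (- t))
           (at_right 0) (Rbar_locally p_infty).

(* A hypergraph: list of edges; vertex v_i is encoded by the natural number i;
   each edge is the increasing list of its vertex indices. *)
Definition hgraph := list (list nat).

(* A finitely supported probability distribution over hypergraphs:
   a list of (probability weight, outcome) pairs. *)
Definition hdist := list (R * hgraph).

(* One step of the RRH from size n (vertices 1..n, n edges) to size n+1:
   pick an edge e uniformly (prob 1/n each); the new vertex is n+1.
   If e = {v_1}: new edge {v_1, v_{n+1}}.
   Otherwise: with prob 1-r new edge e ∪ {v_{n+1}},
              with prob r new edge (e minus its largest vertex) ∪ {v_{n+1}}. *)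
Definition rrh_step (r : R) (n : nat) (H : hgraph) : hdist :=
  flat_map (fun e =>
    match e with
    | [1%nat] => [(/ INR n, H ++ [[1%nat; S n]])]
    | _ => [(/ INR n * (1 - r), H ++ [e ++ [S n]]);
            (/ INR n * r, H ++ [removelast e ++ [S n]])]
    end) H.

Definition dist_step (r : R) (n : nat) (D : hdist) : hdist :=
  flat_map (fun pH => map (fun qH' => (fst pH * fst qH', snd qH'))
                          (rrh_step r n (snd pH))) D.

Fixpoint rrh (r : R) (N : nat) : hdist :=
  match N with
  | O => []
  | S n => match n with
           | O => [(1, [[1%nat]])]
           | S _ => dist_step r n (rrh r n)
           end
  end.

Definition nedges (k : nat) (H : hgraph) : nat :=
  length (filter (fun e => Nat.eqb (length e) k) H).

Definition expect (D : hdist) (f : hgraph -> R) : R :=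
  fold_right (fun pH acc => fst pH * f (snd pH) + acc) 0 D.

Definition ER (r : R) (k N : nat) : R := expect (rrh r N) (fun H => INR (nedges k H)).

(* Main.v *)
Require Import Defs.
From Stdlib Require Import Reals Lra Lia List.
From Coquelicot Require Import Coquelicot.
Import ListNotations.
Open Scope R_scope.

Lemma expect_app D1 D2 f : expect (D1 ++ D2) f = expect D1 f + expect D2 f.
Proof. induction D1 as [|[p H] D IH]; simpl; [lra|]. rewrite IH; lra. Qed.

Lemma expect_map_scal p L f :
  expect (map (fun qH' => (p * fst qH', snd qH')) L) f = p * expect L f.
Proof. induction L as [|[q H] L IH]; simpl; [lra|]. rewrite IH; simpl; ring. Qed.

Lemma expect_dist_step r n D f :
  expect (dist_step r n D) f = expect D (fun H => expect (rrh_step r n H) f).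
Proof.
  induction D as [|[p H] D IH]; simpl; [reflexivity|].
  unfold dist_step in *. simpl. rewrite expect_app, expect_map_scal, IH. reflexivity.
Qed.

Definition inv (n : nat) (H : hgraph) : Prop :=
  exists T, H = [1%nat] :: T /\ length H = n /\ List.Forall (fun e => (2 <= length e)%nat) T.

Lemma expect_ext_supp (P : hgraph -> Prop) D f g :
  List.Forall (fun pH => P (snd pH)) D -> (forall H, P H -> f H = g H) ->
  expect D f = expect D g.
Proof.
  intros HF Hfg. induction D as [|[p H] D IH]; simpl; [reflexivity|].
  inversion HF; subst. rewrite IH by assumption. rewrite Hfg by assumption. reflexivity.
Qed.

Lemma expect_lin D f a b :
  expect D (fun H => a * f H + b) = a * expect D f + b * expect D (fun _ => 1).
Proof. induction D as [|[p H] D IH]; simpl; [ring|]. rewrite IH; ring. Qed.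

Definition Fstep (r : R) (n : nat) (H : hgraph) := fun e : list nat =>
    match e with
    | [1%nat] => [(/ INR n, H ++ [[1%nat; S n]])]
    | _ => [(/ INR n * (1 - r), H ++ [e ++ [S n]]);
            (/ INR n * r, H ++ [removelast e ++ [S n]])]
    end.

Lemma rrh_step_F r n H : rrh_step r n H = flat_map (Fstep r n H) H.
Proof. reflexivity. Qed.

Lemma length_removelast (l : list nat) : length (removelast l) = pred (length l).
Proof. rewrite removelast_firstn_len. rewrite length_firstn. lia. Qed.

Lemma nedges_app k H e : nedges k (H ++ [e]) = (nedges k H + (if Nat.eqb (length e) k then 1 else 0))%nat.
Proof.
  unfold nedges. rewrite filter_app, length_app. simpl.
  destruct (Nat.eqb (length e) k); simpl; reflexivity.
Qed.

Lemma Fstep_long r n H e : (2 <= length e)%nat ->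
  Fstep r n H e = [(/ INR n * (1 - r), H ++ [e ++ [S n]]);
            (/ INR n * r, H ++ [removelast e ++ [S n]])].
Proof.
  intros Hl. destruct e as [|a [|b rest]]; simpl in Hl; try lia.
  destruct a as [|[|a]]; reflexivity.
Qed.

Lemma step_supp_T r n H T :
  List.Forall (fun e => (2 <= length e)%nat) T ->
  List.Forall (fun pH => exists e, snd pH = H ++ [e] /\ (2 <= length e)%nat) (flat_map (Fstep r n H) T).
Proof.
  induction 1 as [|e T He HT IH]; simpl; [constructor|].
  rewrite Fstep_long by assumption.
  apply Forall_app; split; [|exact IH].
  repeat constructor.
  - exists (e ++ [S n]); split; [reflexivity|]. rewrite length_app; simpl; lia.
  - exists (removelast e ++ [S n]); split; [reflexivity|].
    rewrite length_app, length_removelast; simpl; lia.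
Qed.

Lemma step_supp r n H : inv n H ->
  List.Forall (fun pH => inv (S n) (snd pH)) (rrh_step r n H).
Proof.
  intros (T & -> & Hlen & HT).
  rewrite rrh_step_F. simpl. constructor.
  - exists (T ++ [[1%nat; S n]]). split; [reflexivity|]. split.
    + simpl in *. rewrite length_app. simpl. lia.
    + apply Forall_app; split; auto.
  - eapply Forall_impl; [|apply (step_supp_T r n ([1%nat] :: T) T HT)].
    intros [p H'] (e & He & Hle). simpl in *. subst.
    exists (T ++ [e]). split; [reflexivity|]. split.
    + simpl in *. rewrite length_app. simpl. lia.
    + apply Forall_app; split; auto.
Qed.

Lemma dist_supp r n D : (forall H, inv n H -> True) ->
  List.Forall (fun pH => inv n (snd pH)) D ->
  List.Forall (fun pH => inv (S n) (snd pH)) (dist_step r n D).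
Proof.
  intros _ HD. induction HD as [|[p H] D HH HD IH]; simpl; [constructor|].
  unfold dist_step in *. simpl. apply Forall_app; split; [|exact IH].
  apply Forall_map. simpl in HH.
  eapply Forall_impl; [|apply (step_supp r n H HH)]. simpl. auto.
Qed.

Lemma rrh_supp r m : List.Forall (fun pH => inv (S m) (snd pH)) (rrh r (S m)).
Proof.
  induction m as [|m IH].
  - simpl. constructor; [|constructor]. exists []. simpl. auto.
  - change (rrh r (S (S m))) with (dist_step r (S m) (rrh r (S m))).
    apply dist_supp; auto.
Qed.

Definition f2 (H : hgraph) : R := INR (nedges 2 H).

Lemma step_T_expect r n H T :
  List.Forall (fun e => (2 <= length e)%nat) T ->
  expect (flat_map (Fstep r n H) T) f2 = / INR n * (INR (length T) * f2 H + r * INR (nedges 2 T)).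
Proof.
  induction 1 as [|e T He HT IH]; [simpl; ring|].
  cbn [flat_map]. rewrite Fstep_long by assumption. cbn [app expect fold_right fst snd]. change (fold_right _ 0 (flat_map (Fstep r n H) T)) with (expect (flat_map (Fstep r n H) T) f2). rewrite IH.
  unfold f2. rewrite !nedges_app.
  rewrite !length_app, !length_removelast.
  assert (E : nedges 2 (e :: T) = ((if Nat.eqb (length e) 2 then 1 else 0) + nedges 2 T)%nat).
  { unfold nedges. simpl. destruct (Nat.eqb (length e) 2); reflexivity. }
  rewrite E. change (length (e :: T)) with (S (length T)). rewrite S_INR.
  destruct (length e) as [|[|[|k]]]; try lia; cbn -[INR]; rewrite ?Nat.add_1_r; cbn -[INR];
  rewrite ?plus_INR; change (INR 1) with 1; change (INR 0) with 0; rewrite ?S_INR; ring.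
Qed.


Lemma step_T_mass r n H T :
  List.Forall (fun e => (2 <= length e)%nat) T ->
  expect (flat_map (Fstep r n H) T) (fun _ => 1) = / INR n * INR (length T).
Proof.
  induction 1 as [|e T He HT IH]; [simpl; ring|].
  cbn [flat_map]. rewrite Fstep_long by assumption. cbn [app expect fold_right fst snd].
  change (fold_right _ 0 (flat_map (Fstep r n H) T)) with (expect (flat_map (Fstep r n H) T) (fun _ => 1)).
  rewrite IH. change (length (e :: T)) with (S (length T)). rewrite S_INR. ring.
Qed.

Lemma f2_cons1 T : f2 ([1%nat] :: T) = INR (nedges 2 T).
Proof. reflexivity. Qed.

Lemma step_expect r n H : inv n H ->
  expect (rrh_step r n H) f2 = (1 + r / INR n) * f2 H + / INR n.
Proof.
  intros (T & -> & Hlen & HT).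
  assert (Hn : INR n <> 0). { simpl in Hlen. subst n. rewrite S_INR. pose proof (pos_INR (length T)). lra. }
  rewrite rrh_step_F. cbn [flat_map Fstep app expect fold_right fst snd].
  change (fold_right _ 0 (flat_map (Fstep r n ([1%nat] :: T)) T)) with (expect (flat_map (Fstep r n ([1%nat] :: T)) T) f2).
  rewrite step_T_expect by assumption.
  unfold f2. change (nedges 2 ([1%nat] :: T ++ [[1%nat; S n]])) with (nedges 2 (T ++ [[1%nat; S n]])).
  change (nedges 2 ([1%nat] :: T)) with (nedges 2 T). rewrite nedges_app. cbn -[INR].
  rewrite plus_INR. change (INR 1) with 1. simpl in Hlen. subst n. rewrite S_INR in *. field. exact Hn.
Qed.

Lemma step_mass r n H : inv n H -> expect (rrh_step r n H) (fun _ => 1) = 1.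
Proof.
  intros (T & -> & Hlen & HT).
  rewrite rrh_step_F. cbn [flat_map Fstep app expect fold_right fst snd].
  change (fold_right _ 0 (flat_map (Fstep r n ([1%nat] :: T)) T)) with (expect (flat_map (Fstep r n ([1%nat] :: T)) T) (fun _ => 1)).
  rewrite step_T_mass by assumption. simpl in Hlen. subst n. rewrite S_INR. field.
  rewrite <- S_INR. apply not_0_INR. lia.
Qed.

Lemma mass_rrh r m : expect (rrh r (S m)) (fun _ => 1) = 1.
Proof.
  induction m as [|m IH]; [simpl; ring|].
  change (rrh r (S (S m))) with (dist_step r (S m) (rrh r (S m))).
  rewrite expect_dist_step.
  rewrite (expect_ext_supp (inv (S m)) _ _ (fun _ => 1)); [exact IH|apply rrh_supp|].
  apply step_mass.
Qed.

Lemma ER_rec r m : ER r 2 (S (S m)) = (1 + r / INR (S m)) * ER r 2 (S m) + / INR (S m).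
Proof.
  unfold ER. change (fun H => INR (nedges 2 H)) with f2.
  change (rrh r (S (S m))) with (dist_step r (S m) (rrh r (S m))).
  rewrite expect_dist_step.
  rewrite (expect_ext_supp (inv (S m)) _ _ (fun H => (1 + r / INR (S m)) * f2 H + / INR (S m)));
    [|apply rrh_supp|apply step_expect].
  rewrite expect_lin, mass_rrh. ring.
Qed.

Lemma ER_1 r : ER r 2 1 = 0.
Proof. unfold ER. simpl. unfold nedges. simpl. ring. Qed.

Fixpoint Q (r : R) (k : nat) : R :=
  match k with O => 1 | S k' => Q r k' * (1 + r / INR (S k')) end.

Lemma ER_Q r k : r <> 0 -> ER r 2 (S k) = (Q r k - 1) / r.
Proof.
  intros Hr. induction k as [|k IH].
  - rewrite ER_1. simpl. field. auto.
  - rewrite ER_rec, IH. cbn [Q]. field. split; auto. apply not_0_INR. lia.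
Qed.

Lemma exp_le x y : x <= y -> exp x <= exp y.
Proof. intros [H|H]; [left; apply exp_increasing; auto| subst; lra]. Qed.

Lemma dcont (g : R -> R) x : ex_derive g x -> continuous g x.
Proof. apply (@ex_derive_continuous R_AbsRing R_NormedModule). Qed.

Definition FA := at_right 0.
Definition FB := Rbar_locally p_infty.

Lemma ln_bound t c : 0 < t -> 0 < c -> ln t <= t / c - 1 + ln c.
Proof.
  intros Ht Hc. pose proof (exp_ineq1_le (ln (t / c))).
  rewrite exp_ln in H by (apply Rdiv_lt_0_compat; auto).
  rewrite ln_div in H by auto. lra.
Qed.

Lemma bound_pow (y : R) : 0 <= y -> exists K, 0 < K /\
  forall t, 0 < t -> Rpower t y * exp (- t) <= K * exp (- t / 2).
Proof.
  intros Hy. set (c := 2 * y + 2).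
  exists (exp (y * (ln c - 1))). split; [apply exp_pos|].
  intros t Ht. unfold Rpower. rewrite <- !exp_plus. apply exp_le.
  pose proof (ln_bound t c Ht ltac:(unfold c; lra)).
  assert (y * ln t <= y * (t / c - 1 + ln c)) by (apply Rmult_le_compat_l; auto).
  assert (y * (t / c) <= t / 2).
  { unfold c. apply (Rmult_le_reg_r (2*y+2)); [lra|]. field_simplify; [|lra]. nra. }
  nra.
Qed.

Section Exist.
Variable f : R -> R.
Variable K : R.
Hypothesis HK : 0 < K.
Hypothesis Hc : forall t, 0 < t -> continuous f t.
Hypothesis Hb : forall t, 0 < t -> Rabs (f t) <= K * exp (- t / 2).

Lemma exR a b : 0 < a -> 0 < b -> ex_RInt f a b.
Proof.
  intros Ha Hb'. apply (@ex_RInt_continuous R_CompleteNormedModule). intros z Hz. apply Hc.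
  assert (0 < Rmin a b) by (apply Rmin_glb_lt; auto). lra.
Qed.

Lemma near_bound a a' : 0 < a -> a <= a' -> Rabs (RInt f a a') <= (a' - a) * K.
Proof.
  intros Ha Ha'. apply abs_RInt_le_const; auto. apply exR; lra.
  intros t Ht. eapply Rle_trans; [apply Hb; lra|].
  rewrite <- (Rmult_1_r K) at 2. apply Rmult_le_compat_l; [lra|].
  rewrite <- exp_0. apply exp_le. lra.
Qed.

Lemma near_bound' a a' : 0 < a -> 0 < a' -> Rabs (RInt f a a') <= Rabs (a' - a) * K.
Proof.
  intros Ha Ha'. destruct (Rle_dec a a').
  - rewrite (Rabs_right (a' - a)) by lra. apply near_bound; auto.
  - rewrite <- (@opp_RInt_swap R_CompleteNormedModule f a' a) by (apply exR; auto).
    change (opp (RInt f a' a)) with (- RInt f a' a). rewrite Rabs_Ropp.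
    rewrite (Rabs_left (a' - a)) by lra. replace (- (a' - a)) with (a - a') by ring.
    apply near_bound; lra.
Qed.

Lemma exp_int b b' : b <= b' ->
  RInt (fun t => K * exp (- t / 2)) b b' = 2 * K * (exp (- b / 2) - exp (- b' / 2)).
Proof.
  intros _. apply is_RInt_unique.
  replace (2 * K * (exp (- b / 2) - exp (- b' / 2)))
    with (minus ((fun t => - 2 * K * exp (- t / 2)) b') ((fun t => - 2 * K * exp (- t / 2)) b))
    by (unfold minus, plus, opp; simpl; ring).
  apply (@is_RInt_derive R_CompleteNormedModule (fun t => - 2 * K * exp (- t / 2)) (fun t => K * exp (- t / 2))).
  - intros x _. auto_derive; auto. unfold Rdiv. field.
  - intros z _. apply dcont. auto_derive. auto.
Qed.

Lemma far_bound B b b' : 0 < B -> B <= b -> b <= b' -> Rabs (RInt f b b') <= 2 * K * exp (- B / 2).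
Proof.
  intros HB Hbb Hb'. eapply Rle_trans; [apply abs_RInt_le; auto; apply exR; lra|].
  eapply Rle_trans.
  { apply (RInt_le _ (fun t => K * exp (- t / 2))); auto.
    - apply (@ex_RInt_continuous R_CompleteNormedModule). intros z Hz. apply continuous_comp; [|apply continuous_Rabs].
      apply Hc. rewrite Rmin_left in Hz by lra. lra.
    - apply (@ex_RInt_continuous R_CompleteNormedModule). intros z _. apply dcont. auto_derive. auto.
    - intros x Hx. apply Hb. lra. }
  rewrite exp_int by auto.
  pose proof (exp_pos (- b' / 2)). assert (exp (- b / 2) <= exp (- B / 2)) by (apply exp_le; lra).
  nra.
Qed.

Lemma far_bound' B b b' : 0 < B -> B <= b -> B <= b' -> Rabs (RInt f b b') <= 2 * K * exp (- B / 2).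
Proof.
  intros HB Hb1 Hb2. destruct (Rle_dec b b').
  - apply far_bound; auto.
  - rewrite <- (@opp_RInt_swap R_CompleteNormedModule f b' b) by (apply exR; lra).
    change (opp (RInt f b' b)) with (- RInt f b' b). rewrite Rabs_Ropp.
    apply far_bound; lra.
Qed.

Lemma exp_small B : 0 < B -> exp (- B / 2) <= 2 / B.
Proof.
  intros HB. pose proof (exp_ineq1_le (B / 2)).
  replace (- B / 2) with (- (B / 2)) by field. rewrite exp_Ropp.
  pose proof (exp_pos (B/2)).
  apply (Rmult_le_reg_r (exp (B/2) * B)). nra.
  field_simplify; [|lra|lra]. nra.
Qed.

Lemma gen_exists : ex_RInt_gen f FA FB.
Proof.
  set (If := fun ab : R * R => RInt f (fst ab) (snd ab)).
  assert (HP : ProperFilter (filter_prod FA FB)) by (apply Hierarchy.filter_prod_proper).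
  destruct (proj1 (@Hierarchy.filterlim_locally_cauchy _ R_CompleteSpace _ HP If)) as [l Hl].
  - intros eps. set (d := eps / (4 * K)). set (B := 16 * K / eps).
    assert (Hd : 0 < d) by (unfold d; apply Rdiv_lt_0_compat; [apply cond_pos|lra]).
    assert (HB : 0 < B) by (unfold B; apply Rdiv_lt_0_compat; [lra|apply cond_pos]).
    exists (fun ab => (0 < fst ab < d) /\ B < snd ab). split.
    + apply (Filter_prod FA FB _ (fun a => 0 < a < d) (fun b => B < b)).
      * exists (mkposreal d Hd). intros y Hy Hy0. simpl in *.
        change (Rabs (y - 0) < d) in Hy. rewrite Rminus_0_r in Hy.
        apply Rabs_def2 in Hy. lra.
      * exists B. auto.
      * intros x y Hx Hy. simpl. auto.
    + intros [a b] [a' b'] [Ha Hb1] [Ha' Hb2]. simpl in *.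
      change (Rabs (RInt f a' b' - RInt f a b) < eps).
      assert (E : RInt f a' b' - RInt f a b = RInt f a' a + RInt f b b').
      { pose proof (RInt_Chasles (V:=R_CompleteNormedModule) f a' a b' ltac:(apply exR; lra) ltac:(apply exR; lra)) as C1.
        pose proof (RInt_Chasles (V:=R_CompleteNormedModule) f a b b' ltac:(apply exR; lra) ltac:(apply exR; lra)) as C2.
        unfold plus in C1, C2; simpl in C1, C2. lra. }
      rewrite E. eapply Rle_lt_trans; [apply Rabs_triang|].
      pose proof (near_bound' a' a ltac:(lra) ltac:(lra)).
      pose proof (far_bound' B b b' HB ltac:(lra) ltac:(lra)).
      pose proof (exp_small B HB).
      assert (Rabs (a - a') <= d) by (apply Rabs_le; lra).
      assert (Rabs (a - a') * K <= eps / 4) by (replace (eps/4) with (d * K) by (unfold d; field; lra); apply Rmult_le_compat_r; lra).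
      assert (2 * K * exp (- B / 2) <= eps / 4).
      { eapply Rle_trans. apply Rmult_le_compat_l; [lra|exact H1].
        unfold B. right. field. split; [apply Rgt_not_eq, cond_pos| lra]. }
      pose proof (cond_pos eps). lra.
  - exists l. intros P HPl. unfold filtermapi.
    specialize (Hl P HPl).
    assert (Hpos : filter_prod FA FB (fun ab => 0 < fst ab /\ 0 < snd ab)).
    { apply (Filter_prod FA FB _ (fun a => 0 < a) (fun b => 0 < b)).
      - exists (mkposreal 1 Rlt_0_1). intros y _ Hy. exact Hy.
      - exists 0. auto.
      - intros x y Hx Hy. simpl. auto. }
    unfold filtermap in Hl. generalize (filter_and (F:=filter_prod FA FB) (fun ab => P (If ab)) _ Hl Hpos). apply filter_imp.
    intros [a b] [HPa [Ha Hb']]. simpl in *. exists (RInt f a b). split; auto.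
    apply (RInt_correct (V:=R_CompleteNormedModule)). apply exR; auto.
Qed.

End Exist.

Lemma locally_pos x : 0 < x -> locally x (fun u => 0 < u).
Proof.
  intros Hx. exists (mkposreal x Hx). intros u Hu. change (Rabs (u - x) < x) in Hu.
  apply Rabs_def2 in Hu. lra.
Qed.

Lemma ev_pos : filter_prod FA FB (fun ab => 0 < fst ab /\ 0 < snd ab).
Proof.
  apply (Filter_prod FA FB _ (fun a => 0 < a) (fun b => 0 < b)).
  - exists (mkposreal 1 Rlt_0_1). intros y _ Hy. exact Hy.
  - exists 0. auto.
  - intros x y Hx Hy. simpl. auto.
Qed.

Lemma ev_le : filter_prod FA FB (fun ab => 0 < fst ab <= snd ab).
Proof.
  apply (Filter_prod FA FB _ (fun a => 0 < a < 1) (fun b => 1 < b)).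
  - exists (mkposreal 1 Rlt_0_1). intros y Hy Hy0. change (Rabs (y - 0) < 1) in Hy.
    rewrite Rminus_0_r in Hy. apply Rabs_def2 in Hy. lra.
  - exists 1. auto.
  - intros x y Hx Hy. simpl. lra.
Qed.

Lemma gen_derive (h g : R -> R) la lb :
  (forall t, 0 < t -> is_derive h t (g t)) -> (forall t, 0 < t -> continuous g t) ->
  filterlim h FA (locally la) -> filterlim h FB (locally lb) ->
  is_RInt_gen g FA FB (lb - la).
Proof.
  intros Hd Hc Ha Hb.
  apply (is_RInt_gen_ext (Derive h)).
  { generalize ev_pos. apply filter_imp. intros [a b] [Ha0 Hb0] x Hx. simpl in *.
    apply is_derive_unique, Hd. assert (0 < Rmin a b) by (apply Rmin_glb_lt; auto). lra. }
  apply is_RInt_gen_Derive; auto.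
  - generalize ev_pos. apply filter_imp. intros [a b] [Ha0 Hb0] x Hx. simpl in *.
    assert (0 < Rmin a b) by (apply Rmin_glb_lt; auto). eexists; apply Hd; lra.
  - generalize ev_pos. apply filter_imp. intros [a b] [Ha0 Hb0] x Hx. simpl in *.
    assert (0 < Rmin a b) by (apply Rmin_glb_lt; auto).
    apply (continuous_ext_loc _ g).
    + generalize (locally_pos x ltac:(lra)). apply filter_imp. intros u Hu.
      symmetry. apply is_derive_unique, Hd; auto.
    + apply Hc; lra.
Qed.

Lemma lim0 (h : R -> R) l : (forall t, 0 < t < 1 -> Rabs (h t - l) <= t) ->
  filterlim h FA (locally l).
Proof.
  intros H. apply filterlim_locally. intros eps.
  exists (mkposreal (Rmin eps 1) (Rmin_pos _ _ (cond_pos eps) Rlt_0_1)).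
  intros y Hy Hy0. change (Rabs (y - 0) < Rmin eps 1) in Hy. rewrite Rminus_0_r in Hy.
  apply Rabs_def2 in Hy. pose proof (Rmin_l eps 1). pose proof (Rmin_r eps 1).
  change (Rabs (h y - l) < eps). eapply Rle_lt_trans; [apply H|]; lra.
Qed.

Lemma liminf (h : R -> R) C : 0 < C -> (forall t, 0 < t -> Rabs (h t) <= C * exp (- t / 2)) ->
  filterlim h FB (locally 0).
Proof.
  intros HC H. apply filterlim_locally. intros eps.
  pose proof (cond_pos eps).
  exists (4 * C / eps). intros t Ht.
  assert (0 < t). { assert (0 < 4 * C / eps) by (apply Rdiv_lt_0_compat; lra). lra. }
  change (Rabs (h t - 0) < eps). rewrite Rminus_0_r.
  eapply Rle_lt_trans; [apply H; auto|].
  eapply Rle_lt_trans. apply Rmult_le_compat_l; [lra|apply exp_small; auto].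
  assert (4 * C < t * eps).
  { replace (4*C) with (4*C/eps*eps) by (field; lra). apply Rmult_lt_compat_r; lra. }
  apply (Rmult_lt_reg_r t); [lra|]. replace (C * (2 / t) * t) with (2*C) by (field; lra). nra.
Qed.

Definition gi (x t : R) : R := Rpower t (x - 1) * exp (- t).

Lemma gi_cont x t : 0 < t -> continuous (gi x) t.
Proof. intros Ht. apply dcont. unfold gi, Rpower. auto_derive. lra. Qed.

Lemma gi_pos x t : 0 < gi x t.
Proof. unfold gi, Rpower. apply Rmult_lt_0_compat; apply exp_pos. Qed.

Lemma Gamma_correct x : 1 <= x -> is_RInt_gen (gi x) FA FB (Gamma x).
Proof.
  intros Hx. destruct (bound_pow (x - 1) ltac:(lra)) as [K [HK HB]].
  apply (RInt_gen_correct (V:=R_CompleteNormedModule)).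
  apply (gen_exists (gi x) K HK).
  - apply gi_cont.
  - intros t Ht. rewrite Rabs_right by (left; apply gi_pos). apply HB; auto.
Qed.

Lemma Gamma_1 : Gamma 1 = 1.
Proof.
  unfold Gamma. apply (is_RInt_gen_unique (V:=R_CompleteNormedModule)).
  change (is_RInt_gen (gi 1) FA FB 1).
  apply (is_RInt_gen_ext (fun t => exp (- t))).
  { apply filter_forall. intros ab x _. unfold gi, Rpower.
    replace (1 - 1) with 0 by ring. rewrite Rmult_0_l, exp_0, Rmult_1_l. reflexivity. }
  replace 1 with (0 - (-1)) by ring.
  apply (gen_derive (fun t => - exp (- t))).
  - intros t _. auto_derive; auto. ring.
  - intros t _. apply dcont. auto_derive. auto.
  - apply lim0. intros t Ht. pose proof (exp_ineq1_le (-t)).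
    assert (exp (- t) <= 1) by (rewrite <- exp_0; apply exp_le; lra).
    rewrite Rabs_right by lra; lra.
  - apply (liminf _ 1 Rlt_0_1). intros t Ht. rewrite Rabs_Ropp, Rabs_right by (left; apply exp_pos).
    rewrite Rmult_1_l. apply exp_le. lra.
Qed.

Lemma Gamma_succ x : 1 <= x -> Gamma (x + 1) = x * Gamma x.
Proof.
  intros Hx.
  pose proof (Gamma_correct x Hx) as HG.
  assert (HD : is_RInt_gen (fun t => Rpower t x * exp (- t) - x * gi x t) FA FB (0 - 0)).
  { apply (gen_derive (fun t => - (Rpower t x * exp (- t)))).
    - intros t Ht. unfold gi, Rpower. auto_derive; [lra|].
      replace ((x - 1) * ln t) with (x * ln t + - ln t) by ring.
      rewrite exp_plus, (exp_Ropp (ln t)), exp_ln by auto. field. lra.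
    - intros t Ht. apply dcont. unfold gi, Rpower. auto_derive. lra.
    - apply lim0. intros t Ht. rewrite Rminus_0_r, Rabs_Ropp.
      assert (0 < Rpower t x * exp (- t)) by (unfold Rpower; apply Rmult_lt_0_compat; apply exp_pos).
      rewrite Rabs_right by lra.
      assert (exp (- t) <= 1) by (rewrite <- exp_0; apply exp_le; lra).
      assert (Rpower t x <= t).
      { unfold Rpower. rewrite <- (exp_ln t) at 2 by lra. apply exp_le.
        assert (ln t < 0) by (rewrite <- ln_1; apply ln_increasing; lra). nra. }
      assert (0 < Rpower t x) by (unfold Rpower; apply exp_pos). nra.
    - destruct (bound_pow x ltac:(lra)) as [K [HK HB]].
      apply (liminf _ K HK). intros t Ht. rewrite Rabs_Ropp.
      rewrite Rabs_right by (left; unfold Rpower; apply Rmult_lt_0_compat; apply exp_pos).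
      apply HB; auto. }
  pose proof (is_RInt_gen_scal _ x _ HG) as HS.
  pose proof (is_RInt_gen_plus _ _ _ _ HD HS) as HP.
  unfold Gamma. apply (is_RInt_gen_unique (V:=R_CompleteNormedModule)).
  change (is_RInt_gen (gi (x + 1)) FA FB (x * Gamma x)).
  replace (x * Gamma x) with (plus (0 - 0) (scal x (Gamma x))) by (unfold plus, scal; simpl; unfold mult; simpl; ring).
  refine (is_RInt_gen_ext _ _ _ _ HP).
  apply filter_forall. intros ab y _. unfold plus, scal; simpl. unfold mult; simpl.
  unfold gi. replace (x + 1 - 1) with x by ring. ring.
Qed.

Lemma bern L s : 0 < s < 1 -> exp (s * L) <= 1 - s + s * exp L.
Proof.
  intros Hs. set (A := exp (s * L)).
  assert (HA : 0 < A) by apply exp_pos.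
  pose proof (exp_ineq1_le ((1 - s) * L)) as H1.
  pose proof (exp_ineq1_le (- (s * L))) as H2.
  assert (E1 : exp L = A * exp ((1 - s) * L)) by (unfold A; rewrite <- exp_plus; f_equal; ring).
  assert (E2 : 1 = A * exp (- (s * L))) by (unfold A; rewrite <- exp_plus; replace (s * L + - (s * L)) with 0 by ring; rewrite exp_0; ring).
  assert (F1 : A * (1 + (1 - s) * L) <= exp L) by (rewrite E1; apply Rmult_le_compat_l; lra).
  assert (F2 : A * (1 + - (s * L)) <= 1) by (rewrite E2 at 2; apply Rmult_le_compat_l; lra).
  nra.
Qed.

Lemma pointwise x s t : 0 < x -> 0 < t -> 0 < s < 1 ->
  gi (x + s) t <= (1 - s) * Rpower x s * gi x t + s * Rpower x (s - 1) * gi (x + 1) t.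
Proof.
  intros Hx Ht Hs. unfold gi, Rpower.
  set (a := ln x). set (b := ln t).
  pose proof (bern (b - a) s Hs) as HB.
  assert (HsA : 0 < exp (s * a)) by apply exp_pos.
  assert (H1 : exp (s * b) <= (1 - s) * exp (s * a) + s * exp ((s - 1) * a + b)).
  { replace (exp (s * b)) with (exp (s * a) * exp (s * (b - a))) by (rewrite <- exp_plus; f_equal; ring).
    replace (exp ((s - 1) * a + b)) with (exp (s * a) * exp (b - a)) by (rewrite <- exp_plus; f_equal; ring).
    nra. }
  replace (exp ((x + s - 1) * b)) with (exp ((x - 1) * b) * exp (s * b)) by (rewrite <- exp_plus; f_equal; ring).
  replace (exp ((x + 1 - 1) * b)) with (exp ((x - 1) * b) * exp b) by (rewrite <- exp_plus; f_equal; ring).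
  replace (exp ((s - 1) * a + b)) with (exp ((s - 1) * a) * exp b) in H1 by (rewrite <- exp_plus; f_equal; ring).
  pose proof (exp_pos ((x - 1) * b)). pose proof (exp_pos (- t)).
  assert (0 < exp ((x - 1) * b) * exp (- t)) by (apply Rmult_lt_0_compat; auto).
  nra.
Qed.

Lemma Gamma_wendel x s : 1 <= x -> 0 < s < 1 -> Gamma (x + s) <= Rpower x s * Gamma x.
Proof.
  intros Hx Hs.
  pose proof (Gamma_correct x Hx) as G0.
  pose proof (Gamma_correct (x + 1) ltac:(lra)) as G1.
  pose proof (Gamma_correct (x + s) ltac:(lra)) as G2.
  pose proof (is_RInt_gen_plus _ _ _ _ (is_RInt_gen_scal _ ((1 - s) * Rpower x s) _ G0)
                                   (is_RInt_gen_scal _ (s * Rpower x (s - 1)) _ G1)) as HP.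
  assert (E1 : filter_prod FA FB (fun ab : R * R => fst ab <= snd ab)).
  { generalize ev_le. apply filter_imp. intros ab H. lra. }
  assert (E2 : filter_prod FA FB (fun ab : R * R => forall y, fst ab <= y <= snd ab ->
      norm (gi (x + s) y) <= plus (scal ((1 - s) * Rpower x s) (gi x y)) (scal (s * Rpower x (s - 1)) (gi (x + 1) y)))).
  { generalize ev_le. apply filter_imp. intros ab H y Hy.
    unfold norm, plus, scal; simpl. unfold abs, mult; simpl.
    rewrite Rabs_right by (left; apply gi_pos).
    pose proof (pointwise x s y ltac:(lra) ltac:(lra) Hs). lra. }
  pose proof (RInt_gen_norm (V:=R_CompleteNormedModule) _ _ _ _ E1 E2 G2 HP) as HN.
  unfold norm, plus, scal in HN; simpl in HN. unfold abs, mult in HN; simpl in HN.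
  rewrite Gamma_succ in HN by lra.
  assert (E : s * Rpower x (s - 1) * (x * Gamma x) = s * Rpower x s * Gamma x).
  { unfold Rpower. replace (exp (s * ln x)) with (exp ((s - 1) * ln x) * exp (ln x))
      by (rewrite <- exp_plus; f_equal; ring). rewrite exp_ln by lra. ring. }
  pose proof (Rle_abs (Gamma (x + s))). lra.
Qed.

Lemma INR_S_pos k : 0 < INR (S k).
Proof. apply lt_0_INR. lia. Qed.

Lemma Gamma_nat_pos k : 0 < Gamma (INR (S k)).
Proof.
  induction k as [|k IH].
  - simpl. rewrite Gamma_1. lra.
  - rewrite S_INR, Gamma_succ. apply Rmult_lt_0_compat; auto. apply INR_S_pos.
    pose proof (pos_INR k). rewrite S_INR. lra.
Qed.

Lemma Gamma_Q r k : 0 < r -> Gamma (INR (S k) + r) = Q r k * Gamma (1 + r) * Gamma (INR (S k)).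
Proof.
  intros Hr. induction k as [|k IH].
  - simpl. rewrite Gamma_1. ring.
  - replace (INR (S (S k)) + r) with ((INR (S k) + r) + 1) by (rewrite (S_INR (S k)); ring).
    rewrite Gamma_succ by (pose proof (INR_S_pos k); rewrite S_INR; pose proof (pos_INR k); lra).
    rewrite IH. rewrite (S_INR (S k)), Gamma_succ by (rewrite S_INR; pose proof (pos_INR k); lra).
    cbn [Q]. field. apply Rgt_not_eq, INR_S_pos.
Qed.

Lemma Q_pos r k : 0 < r -> 0 < Q r k.
Proof.
  intros Hr. induction k as [|k IH]; simpl; [lra|].
  apply Rmult_lt_0_compat; auto. pose proof (INR_S_pos k).
  assert (0 < r / INR (S k)) by (apply Rdiv_lt_0_compat; auto). simpl in *. lra.
Qed.

Lemma Gamma_1r_pos r : 0 < r < 1 -> 0 < Gamma (1 + r).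
Proof.
  intros Hr. pose proof (Gamma_wendel (1 + r) (1 - r) ltac:(lra) ltac:(lra)) as H.
  replace (1 + r + (1 - r)) with (1 + 1) in H by ring.
  rewrite Gamma_succ, Gamma_1 in H by lra.
  assert (0 < Rpower (1 + r) (1 - r)) by (unfold Rpower; apply exp_pos).
  destruct (Rle_lt_dec (Gamma (1 + r)) 0); auto. nra.
Qed.

Lemma Rpower_pinf r : 0 < r -> is_lim_seq (fun k => Rpower (INR (S k)) r) p_infty.
Proof.
  intros Hr.
  apply (is_lim_comp_seq (fun y => Rpower y r) (fun k => INR (S k)) p_infty p_infty).
  - unfold Rpower. apply (is_lim_comp exp (fun y => r * ln y) p_infty p_infty p_infty).
    + apply is_lim_exp_p.
    + replace p_infty with (Rbar_mult r p_infty) at 2.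
      * apply is_lim_scal_l. apply is_lim_ln_p.
      * simpl. destruct (Rle_dec 0 r); [|lra]. destruct (Rle_lt_or_eq_dec 0 r r0); [reflexivity|lra].
    + exists 0. intros y _. discriminate.
  - exists O. intros n _. discriminate.
  - apply (is_lim_seq_incr_1 INR p_infty). apply is_lim_seq_INR.
Qed.

Lemma inv_zero (u : nat -> R) : is_lim_seq u p_infty -> is_lim_seq (fun n => / u n) 0.
Proof.
  intros H. apply (is_lim_seq_inv u p_infty H). discriminate.
Qed.

Theorem mainTheorem15 (r : R) (hr0 : 0 < r) (hr1 : r < 1) :
  (forall N : nat, (1 <= N)%nat ->
     ER r 2 N = / r * (Gamma (INR N + r) / (Gamma (1 + r) * Gamma (INR N)) - 1))
  /\
  is_lim_seq (fun N : nat => ER r 2 N / (Rpower (INR N) r / (r * Gamma (1 + r)))) 1.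
Proof.
  pose proof (Gamma_1r_pos r ltac:(lra)) as HG1.
  split.
  - intros N HN. destruct N as [|k]; [lia|].
    rewrite ER_Q by lra. rewrite Gamma_Q by lra.
    pose proof (Gamma_nat_pos k). field. repeat split; lra.
  - apply is_lim_seq_incr_1.
    set (A := fun k => Gamma (INR (S k) + r) / (Gamma (INR (S k)) * Rpower (INR (S k)) r)).
    set (B := fun k => Gamma (1 + r) * / Rpower (INR (S k)) r).
    apply (is_lim_seq_ext (fun k => A k - B k)).
    { intros k. unfold A, B. rewrite ER_Q by lra. rewrite Gamma_Q by lra.
      pose proof (Gamma_nat_pos k).
      assert (0 < Rpower (INR (S k)) r) by (unfold Rpower; apply exp_pos).
      field. repeat split; lra. }
    assert (L : is_lim_seq (fun k => A k - B k) (1 - 0)); [|rewrite Rminus_0_r in L; exact L].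
    apply is_lim_seq_minus'.
    +
      apply (is_lim_seq_le_le_loc (fun k => 1 - r * / (INR (S k) + r)) A (fun _ => 1)).
      * exists O. intros k _. unfold A.
        set (N := INR (S k)). assert (HN : 1 <= N) by (unfold N; rewrite S_INR; pose proof (pos_INR k); lra).
        pose proof (Gamma_wendel N r HN ltac:(lra)) as W1.
        pose proof (Gamma_wendel (N + r) (1 - r) ltac:(lra) ltac:(lra)) as W2.
        replace (N + r + (1 - r)) with (N + 1) in W2 by ring.
        rewrite Gamma_succ in W2 by lra.
        assert (Hg : 0 < Gamma N) by apply Gamma_nat_pos.
        set (G := Gamma (N + r)) in *. set (g := Gamma N) in *.
        set (p := Rpower N r) in *. set (P1 := Rpower (N + r) (1 - r)) in *.
        set (P2 := Rpower (N + r) r).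
        assert (Hp : 0 < p) by (unfold p, Rpower; apply exp_pos).
        assert (HP1 : 0 < P1) by (unfold P1, Rpower; apply exp_pos).
        assert (HP2 : 0 < P2) by (unfold P2, Rpower; apply exp_pos).
        assert (HpP : p <= P2) by (apply Rle_Rpower_l; lra).
        assert (HPP : P1 * P2 = N + r).
        { unfold P1, P2. rewrite <- Rpower_plus. replace (1 - r + r) with 1 by ring. apply Rpower_1. lra. }
        assert (HGp : 0 < G) by nra.
        split.
        -- assert (E : G / (g * p) - (1 - r * / (N + r)) = (G * (N + r) - N * (g * p)) / ((g * p) * (N + r)))
             by (field; repeat split; lra).
           assert (0 <= (G * (N + r) - N * (g * p)) / ((g * p) * (N + r))).
           { unfold Rdiv. apply Rmult_le_pos; [|left; apply Rinv_0_lt_compat; nra].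
             assert (N * g * p <= P1 * G * P2).
             { apply Rle_trans with (P1 * G * p). nra. apply Rmult_le_compat_l; nra. }
             nra. }
           lra.
        -- apply (Rmult_le_reg_r (g * p)); [nra|]. unfold Rdiv. rewrite Rmult_assoc, Rinv_l by nra. lra.
      * assert (L : is_lim_seq (fun k => 1 - r * / (INR (S k) + r)) (1 - r * 0)); [|rewrite Rmult_0_r, Rminus_0_r in L; exact L].
        apply is_lim_seq_minus'; [apply is_lim_seq_const|].
        apply is_lim_seq_mult'; [apply is_lim_seq_const|].
        apply inv_zero. apply (is_lim_seq_le_p_loc (fun k => INR (S k))).
        -- exists O. intros. lra.
        -- apply (is_lim_seq_incr_1 INR p_infty). apply is_lim_seq_INR.
      * apply is_lim_seq_const.
    + unfold B. assert (L : is_lim_seq (fun k => Gamma (1 + r) * / Rpower (INR (S k)) r) (Gamma (1 + r) * 0)); [|rewrite Rmult_0_r in L; exact L].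
      apply is_lim_seq_mult'; [apply is_lim_seq_const|].
      apply inv_zero. apply Rpower_pinf. lra.
Qed.
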